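(* For the generalized coin-tossing process with parameter $p\in(0,1)$, $q=1-p$, and OPs of length $m=3$, the OP probability vector is $\mathbf p=(p^2,\,p^2q,\,p^2q,\,pq^2,\,pq^2,\,q^2)^\top$, and the long-run covariance matrix is $$\Sigma=\begin{pmatrix} p^2(1+2p-3p^2)&p^3q(1-3p)&p^3q(1-3p)&p^2q^2(1-3p)&p^2q^2(1-3p)&-3p^2q^2\\ p^3q(1-3p)&p^2q(1-3p^2q)&p^3q(1-3pq)&-3p^3q^3&p^2q^2(1-3pq)&p^2q^2(1-3q)\\ p^3q(1-3p)&p^3q(1-3pq)&p^2q(1-3p^2q)&p^2q^2(1-3pq)&-3p^3q^3&p^2q^2(1-3q)\\ p^2q^2(1-3p)&-3p^3q^3&p^2q^2(1-3pq)&pq^2(1-3pq^2)&pq^3(1-3pq)&pq^3(3p-2)\\ p^2q^2(1-3p)&p^2q^2(1-3pq)&-3p^3q^3&pq^3(1-3pq)&pq^2(1-3pq^2)&pq^3(3p-2)\\ -3p^2q^2&p^2q^2(1-3q)&p^2q^2(1-3q)&pq^3(3p-2)&pq^3(3p-2)&pq^2(4-3p) \end{pmatrix}.$$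
   Context: Generalized coin-tossing (GCT) process with parameter $p\in(0,1)$, $q=1-p$: a random strict total order on objects $(X_t)_{t\in\mathbb Z}$ defined from mutually independent Bernoulli variables $\xi_{s,t}$, $s<t$, with $\mathbb P(\xi_{s,t}=1)=p$, recursively in $t-s$: if $t-s=1$, $X_s<X_t$ iff $\xi_{s,t}=1$; if $t-s\ge2$ and there is $r\in(s,t)$ with $X_s<X_r<X_t$ then $X_s<X_t$; if there is $r\in(s,t)$ with $X_s>X_r>X_t$ then $X_s>X_t$; otherwise $X_s<X_t$ iff $\xi_{s,t}=1$. $\Pi_t$ is the permutation in $S_3$ giving the ranks of $(X_t,X_{t+1},X_{t+2})$; OPs in lexicographic order are $\pi_1=(1,2,3)$, $\pi_2=(1,3,2)$, $\pi_3=(2,1,3)$, $\pi_4=(2,3,1)$, $\pi_5=(3,1,2)$, $\pi_6=(3,2,1)$. $p_i=\mathbb P(\Pi_0=\pi_i)$, $p_{ij}(k)=\mathbb P(\Pi_0=\pi_i,\Pi_k=\pi_j)$, $\Sigma=(\sigma_{ij})$ with $\sigma_{ij}=p_i(\delta_{ij}-p_j)+\sum_{k=1}^\infty\big(p_{ij}(k)+p_{ji}(k)-2p_ip_j\big)$. *)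

(* Defs.v *)
From HB Require Import structures.
From mathcomp Require Import all_boot all_order all_algebra.
From mathcomp Require Import all_classical all_reals.
From mathcomp Require Import topology normedtype sequences.
Set Implicit Arguments. Unset Strict Implicit. Unset Printing Implicit Defensive.
Import Order.TTheory GRing.Theory Num.Theory numFieldNormedType.Exports.
Local Open Scope ring_scope.

(* A realization of the coin variables: xi s t (meaningful for s < t). *)
Definition coins := nat -> nat -> bool.

(* gct_lt_fuel n xi s t = "X_s < X_t" for s < t, by recursion on t - s
   (fuel n >= t - s), exactly following the recursive definition of the
   generalized coin-tossing order. *)
Fixpoint gct_lt_fuel (n : nat) (xi : coins) (s t : nat) : bool :=
  match n with
  | 0 => xi s t
  | n'.+1 =>
    if t == s.+1 then xi s t
    else if has (fun r => gct_lt_fuel n' xi s r && gct_lt_fuel n' xi r t)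
                (iota s.+1 (t - s.+1)) then true
    else if has (fun r => ~~ gct_lt_fuel n' xi s r && ~~ gct_lt_fuel n' xi r t)
                (iota s.+1 (t - s.+1)) then false
    else xi s t
  end.

Definition gct_lt (xi : coins) (a b : nat) : bool :=
  if (a < b)%N then gct_lt_fuel (b - a) xi a b
  else if (b < a)%N then ~~ gct_lt_fuel (a - b) xi b a
  else false.

Definition gct_rank (xi : coins) (t a : nat) : nat :=
  (count (fun b => gct_lt xi (t + b) (t + a)) [:: 0; 1; 2]).+1.

Definition OP (xi : coins) (t : nat) : nat * nat * nat :=
  (gct_rank xi t 0, gct_rank xi t 1, gct_rank xi t 2).

(* pi_1, ..., pi_6 in lexicographic order (indexed by 'I_6, i.e. 0..5) *)
Definition pi_list : seq (nat * nat * nat) :=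
  [:: (1,2,3); (1,3,2); (2,1,3); (2,3,1); (3,1,2); (3,2,1)]%N.
Definition pi_op (i : 'I_6) : nat * nat * nat := nth (0,0,0)%N pi_list i.

Section Prob.
Variable R : realType.
Variable p : R.

(* Independent Bernoulli(p) coins on all pairs (s,t), s < t, of the window
   {0,...,N}.  A finite function f on 'I_N.+1 * 'I_N.+1 encodes the coins;
   coordinates with s >= t are irrelevant and pinned to false. *)
Definition coin_weight (N : nat) (f : {ffun 'I_N.+1 * 'I_N.+1 -> bool}) : R :=
  \prod_(st : 'I_N.+1 * 'I_N.+1)
    (if (val st.1 < val st.2)%N then (if f st then p else 1 - p)
     else (if f st then 0 else 1)).

Definition coins_of (N : nat) (f : {ffun 'I_N.+1 * 'I_N.+1 -> bool}) : coins :=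
  fun s t => if (s < N.+1)%N && (t < N.+1)%N then f (inord s, inord t) else false.

(* probability of an event depending only on the coins inside the window
   {0,...,N} (the finite-dimensional marginal of the i.i.d. family) *)
Definition prob (N : nat) (E : coins -> bool) : R :=
  \sum_(f : {ffun 'I_N.+1 * 'I_N.+1 -> bool}) coin_weight f * (E (coins_of f))%:R.

Definition op_prob (i : 'I_6) : R := prob 2 (fun xi => OP xi 0 == pi_op i).

Definition op_prob2 (i j : 'I_6) (k : nat) : R :=
  prob (k + 2) (fun xi => (OP xi 0 == pi_op i) && (OP xi k == pi_op j)).

Definition cov_term (i j : 'I_6) (k : nat) : R :=
  op_prob2 i j k + op_prob2 j i k - 2 * op_prob i * op_prob j.

Definition Sigma (i j : 'I_6) : R :=
  op_prob i * ((i == j)%:R - op_prob j)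
  + limn (series (fun k => cov_term i j k.+1)).

End Prob.

(* Main.v *)
Require Import Defs.
From HB Require Import structures.
From mathcomp Require Import all_boot all_order all_algebra.
From mathcomp Require Import all_classical all_reals.
From mathcomp Require Import topology normedtype sequences.
From mathcomp Require Import ring lra zify.
Import Order.TTheory GRing.Theory Num.Theory numFieldNormedType.Exports.
Local Open Scope ring_scope.
Set Implicit Arguments. Unset Strict Implicit. Unset Printing Implicit Defensive.
Fixpoint allb (n : nat) : seq (seq bool) :=
  if n is n'.+1 then map (cons true) (allb n') ++ map (cons false) (allb n')
  else [:: [::]].

Lemma allb_size n bs : bs \in allb n -> size bs = n.
Proof.
elim: n bs => [|n IH] bs /=; first by rewrite inE => /eqP ->.
by rewrite mem_cat => /orP[] /mapP[c /IH <- ->].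
Qed.

Section Marg.
Variables (R : comRingType) (I : finType) (w : I -> bool -> R).
Hypothesis hw : forall i, w i true + w i false = 1.

Definition W (f : {ffun I -> bool}) := \prod_i w i (f i).
Definition fset (f : {ffun I -> bool}) x b : {ffun I -> bool} :=
  [ffun i => if i == x then b else f i].
Definition fofl (xs : seq I) (bs : seq bool) : {ffun I -> bool} :=
  [ffun i => nth false bs (index i xs)].
Definition wz (xs : seq I) (bs : seq bool) := \prod_(ib <- zip xs bs) w ib.1 ib.2.

Lemma W_split f x : W f = w x (f x) * \prod_(i | i != x) w i (f i).
Proof. by rewrite /W (bigD1 x). Qed.

Lemma sumW : \sum_f W f = 1.
Proof.
rewrite /W -(bigA_distr_bigA (fun i b => w i b)) /=.
by apply: big1 => i _; rewrite big_bool; apply: hw.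
Qed.

Lemma L1 x b (H : {ffun I -> bool} -> R) :
  (forall f c, H (fset f x c) = H f) ->
  \sum_f W f * ((f x == b)%:R * H f) = w x b * \sum_f W f * H f.
Proof.
move=> hH.
set tog := fun f => fset f x (~~ f x).
have togK : involutive tog.
  move=> f; apply/ffunP => i; rewrite /tog /fset !ffunE eqxx.
  by case: eqP => [->|]; rewrite ?negbK.
have rest : forall f c, \prod_(i | i != x) w i (fset f x c i) = \prod_(i | i != x) w i (f i).
  by move=> f c; apply: eq_bigr => i /negbTE hi; rewrite /fset ffunE hi.
set A := \sum_f _.
set B := \sum_f W f * ((f x == ~~ b)%:R * H f).
have AB : A + B = \sum_f W f * H f.
  rewrite -big_split /=; apply: eq_bigr => f _.
  by move: (f x) (b) => u v; case: u; case: v => /=; rewrite ?mul0r ?mul1r ?mulr0 ?add0r ?addr0.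
have key : w x (~~ b) * A = w x b * B.
  rewrite /B (reindex_inj (inv_inj togK)) /= !mulr_sumr; apply: eq_bigr => f _.
  rewrite !(W_split _ x) rest /tog /fset !ffunE eqxx hH.
  case: (boolP (f x == b)) => [/eqP hfb|hb]; first rewrite hfb.
    by rewrite eqxx; ring.
  have -> : (~~ f x == ~~ b) = false.
    by move: (f x) (b) hb => u v; case: u; case: v.
  by rewrite !mul0r !mulr0.
have wb : w x b + w x (~~ b) = 1 by move: (b) => c; case: c; rewrite ?hw // addrC hw.
by rewrite -AB mulrDr -key -{1}(mul1r A) -wb mulrDl.
Qed.

Lemma fset_id f x : fset f x (f x) = f.
Proof. by apply/ffunP => i; rewrite /fset ffunE; case: eqP => [->|]. Qed.

Lemma fset_fset f x b c : fset (fset f x c) x b = fset f x b.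
Proof. by apply/ffunP => i; rewrite /fset !ffunE; case: eqP. Qed.

Lemma marg (xs : seq I) (G : {ffun I -> bool} -> R) : uniq xs ->
  (forall f g : {ffun I -> bool}, (forall i, i \in xs -> f i = g i) -> G f = G g) ->
  \sum_f W f * G f = \sum_(bs <- allb (size xs)) wz xs bs * G (fofl xs bs).
Proof.
elim: xs G => [|x xs IH] G /=.
  move=> _ hG; rewrite big_seq1 /wz big_nil mul1r.
  rewrite (eq_bigr (fun f => W f * G (fofl [::] [::]))); last first.
    by move=> f _; congr (_ * _); apply: hG.
  by rewrite -mulr_suml sumW mul1r.
move=> /andP[xnin uq] hG.
have E1 : forall f, G f = \sum_(b : bool) (f x == b)%:R * G (fset f x b).
  move=> f; rewrite big_bool.
  by case hfx: (f x) => /=; rewrite ?mul1r ?mul0r ?addr0 ?add0r -hfx fset_id.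
rewrite (eq_bigr (fun f => \sum_(b : bool) W f * ((f x == b)%:R * G (fset f x b)))); last first.
  by move=> f _; rewrite E1 mulr_sumr.
rewrite exchange_big /=.
rewrite (eq_bigr (fun b => w x b * \sum_(bs <- allb (size xs)) wz xs bs * G (fofl (x :: xs) (b :: bs)))); last first.
  move=> b _; rewrite (@L1 x b (fun f => G (fset f x b))); last first.
    by move=> f c; rewrite fset_fset.
  congr (_ * _); rewrite IH //; last first.
    move=> f g hfg; apply: hG => i; rewrite inE /fset !ffunE.
    by case: eqP => // _ /= /hfg.
  apply: eq_bigr => bs _; congr (_ * G _).
  apply/ffunP => i; rewrite /fset /fofl !ffunE /= eq_sym.
  by case: eqP.
rewrite big_bool big_cat !big_map /= !mulr_sumr.
by congr (_ + _); apply: eq_bigr => bs _; rewrite /wz /= big_cons /= mulrA.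
Qed.
End Marg.

Section Coin.
Variables (R : realType) (p : R).

Definition wcoin (N : nat) (st : 'I_N.+1 * 'I_N.+1) (c : bool) : R :=
  if (val st.1 < val st.2)%N then (if c then p else 1 - p) else (if c then 0 else 1).

Lemma wcoin1 N st : wcoin (N := N) st true + wcoin st false = 1.
Proof. by rewrite /wcoin; case: ifP => _; rewrite ?add0r // addrC subrK. Qed.

Definition coins_list (xs : seq (nat * nat)) (bs : seq bool) : coins :=
  fun s t => nth false bs (index (s, t) xs).
Definition wprod (bs : seq bool) : R := \prod_(b <- bs) (if b then p else 1 - p).
Definition dep_on (xs : seq (nat * nat)) (E : coins -> bool) :=
  forall xi xi' : coins, (forall s t, (s, t) \in xs -> xi s t = xi' s t) -> E xi = E xi'.

Definition tord N (st : nat * nat) : 'I_N.+1 * 'I_N.+1 := (inord st.1, inord st.2).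

Lemma tord_eq N a b : (a.1 <= N)%N -> (a.2 <= N)%N -> (b.1 <= N)%N -> (b.2 <= N)%N ->
  (tord N a == tord N b) = (a == b).
Proof.
case: a => a1 a2; case: b => b1 b2 /= h1 h2 h3 h4.
apply/eqP/eqP => [[]|[-> ->]] //.
move=> /(congr1 val); rewrite /= !inordK // => ->.
by move=> /(congr1 val); rewrite /= !inordK // => ->.
Qed.

Lemma prob_marg N xs E : uniq xs -> all (fun st => (st.1 < st.2 <= N)%N) xs -> dep_on xs E ->
  prob p N E = \sum_(bs <- allb (size xs)) wprod bs * (E (coins_list xs bs))%:R.
Proof.
move=> uq hall; rewrite /dep_on => hE.
have hx : forall st, st \in xs -> [/\ (st.1 < st.2)%N, (st.1 <= N)%N & (st.2 <= N)%N].
  move=> st /(allP hall) /andP[h1 h2]; split => //.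
  by apply: leq_trans (ltnW h1) h2.
have -> : prob p N E = \sum_f W (@wcoin N) f * (E (coins_of f))%:R by [].
rewrite (@marg _ _ (@wcoin N) (@wcoin1 N) (map (tord N) xs)); first last.
- move=> f g hfg; suff -> : E (coins_of f) = E (coins_of g) by []; apply: hE => s t hst.
  have [_ h1 h2] := hx _ hst.
  rewrite /coins_of !ltnS h1 h2 /=; apply: hfg.
  by apply/mapP; exists (s, t).
- rewrite map_inj_in_uniq // => a b ha hb /eqP.
  have [_ ? ?] := hx _ ha; have [_ ? ?] := hx _ hb.
  by rewrite tord_eq // => /eqP.
rewrite size_map big_seq_cond [RHS]big_seq_cond; apply: eq_bigr => bs /andP[hbs _].
have sz := allb_size hbs.
congr (_ * _%:R).
- rewrite /wz /wprod; elim: xs bs hx sz {uq hall hE hbs} => [|x xs IH] [|b bs] hx //=.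
    by rewrite !big_nil.
  move=> [sz]; rewrite !big_cons IH; last by [].
    congr (_ * _); rewrite /wcoin /=.
    have [h1 h2 h3] := hx x (mem_head _ _).
    by rewrite !inordK ?ltnS // h1.
  by move=> st hst; apply: hx; rewrite inE hst orbT.
- congr E; apply: funext => s; apply: funext => t.
  rewrite /coins_of /coins_list /fofl.
  case: ifP => [/andP[hs ht]|hst].
    rewrite ffunE; congr nth.
    rewrite !ltnS in hs ht.
    elim: xs hx {uq hall hE hbs sz} => [|x xs IH] //= hx.
    have [_ h2 h3] := hx x (mem_head _ _).
    rewrite (tord_eq (b := (s, t))) // IH //.
    by move=> st hst; apply: hx; rewrite inE hst orbT.
  rewrite nth_default // sz.
  have -> : index (s, t) xs = size xs; last by [].
  apply: memNindex; apply/negP => /hx [_ h2 h3].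
  by move: hst; rewrite !ltnS h2 h3.
Qed.
End Coin.

Lemma fuel_local n (xi xi' : coins) s t : (s < t)%N ->
  (forall a b, (s <= a)%N -> (a < b)%N -> (b <= t)%N -> xi a b = xi' a b) ->
  gct_lt_fuel n xi s t = gct_lt_fuel n xi' s t.
Proof.
elim: n s t => [|n IH] s t hst h /=; first by apply: h.
rewrite h //.
have e : forall r, r \in iota s.+1 (t - s.+1) -> (s < r)%N && (r < t)%N.
  by move=> r; rewrite mem_iota subnKC.
rewrite (@eq_in_has _ (fun r => gct_lt_fuel n xi s r && gct_lt_fuel n xi r t) (fun r => gct_lt_fuel n xi' s r && gct_lt_fuel n xi' r t)); last first.
  by move=> r /e /andP[h1 h2]; rewrite (IH s r) ?(IH r t) // => a b h3 h4 h5; apply: h; lia.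
rewrite (@eq_in_has _ (fun r => ~~ gct_lt_fuel n xi s r && ~~ gct_lt_fuel n xi r t) (fun r => ~~ gct_lt_fuel n xi' s r && ~~ gct_lt_fuel n xi' r t)) //.
by move=> r /e /andP[h1 h2]; rewrite (IH s r) ?(IH r t) // => a b h3 h4 h5; apply: h; lia.
Qed.

Definition sh (xi : coins) k : coins := fun a b => xi (a + k)%N (b + k)%N.

Lemma fuel_shift n xi k s t :
  gct_lt_fuel n xi (s + k) (t + k) = gct_lt_fuel n (sh xi k) s t.
Proof.
elim: n s t => [|n IH] s t //=.
rewrite -addSn eqn_add2r subnDr.
have -> : ((s.+1 + k) = k + s.+1)%N by rewrite addnC.
rewrite iotaDl !has_map.
rewrite (@eq_has _ (preim (addn k) (fun r => gct_lt_fuel n xi (s + k) r && gct_lt_fuel n xi r (t + k)))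
   (fun r => gct_lt_fuel n (sh xi k) s r && gct_lt_fuel n (sh xi k) r t)); last first.
  by move=> r /=; rewrite (addnC k r) !IH.
rewrite (@eq_has _ (preim (addn k) (fun r => ~~ gct_lt_fuel n xi (s + k) r && ~~ gct_lt_fuel n xi r (t + k)))
   (fun r => ~~ gct_lt_fuel n (sh xi k) s r && ~~ gct_lt_fuel n (sh xi k) r t)) //.
by move=> r /=; rewrite (addnC k r) !IH.
Qed.

Lemma gct_lt_shift xi k a b : gct_lt xi (k + a) (k + b) = gct_lt (sh xi k) a b.
Proof.
rewrite /gct_lt !ltn_add2l !subnDl (addnC k a) (addnC k b).
by rewrite !fuel_shift.
Qed.

Lemma OP_shift xi k : OP xi k = OP (sh xi k) 0.
Proof.
by rewrite /OP /gct_rank; congr (_, _, _); congr S; apply: eq_count => b;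
  rewrite gct_lt_shift !add0n.
Qed.

Definition A0 (k : nat) : seq (nat * nat) := [:: (k, k.+1); (k.+1, k.+2); (k, k.+2)].

Lemma OP0_dep (xi xi' : coins) :
  (forall s t, (s, t) \in A0 0 -> xi s t = xi' s t) -> OP xi 0 = OP xi' 0.
Proof.
move=> h.
have h2 : forall a b, (a < b)%N -> (b <= 2)%N -> xi a b = xi' a b.
  move=> [|[|[|a]]] [|[|[|[|b]]]] //= _ _; apply: h; by rewrite !inE.
have hl : forall a b, (a <= 2)%N -> (b <= 2)%N -> gct_lt xi a b = gct_lt xi' a b.
  move=> a b ha hb; rewrite /gct_lt.
  case: ltnP => hab.
    rewrite (@fuel_local _ xi xi') // => x y _ hxy hy.
    by apply: h2 => //; apply: leq_trans hy hb.
  case: ltnP => hba //.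
  rewrite (@fuel_local _ xi xi') // => x y _ hxy hy.
  by apply: h2 => //; apply: leq_trans hy ha.
rewrite /OP /gct_rank; congr (_, _, _); congr S; apply: eq_in_count => b;
  rewrite !inE => /or3P[] /eqP -> ; apply: hl; by [].
Qed.

Lemma OP_dep k (c : nat * nat * nat) : dep_on (A0 k) (fun xi => OP xi k == c).
Proof.
move=> xi xi' h; rewrite (OP_shift xi) (OP_shift xi'); congr (_ == _).
apply: OP0_dep => s t hst; rewrite /sh; apply: h.
move: hst; rewrite !inE => /or3P[] /eqP [-> ->]; rewrite !xpair_eqE; lia.
Qed.

Section Count.
Variables (R : realType) (p : R).

Lemma wprodE (bs : seq bool) :
  wprod p bs = p ^+ (count id bs) * (1 - p) ^+ (size bs - count id bs).
Proof.
elim: bs => [|b bs IH]; first by rewrite /wprod big_nil expr0 mul1r.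
rewrite /wprod big_cons -/(wprod p bs) IH /=.
case: b => /=.
  by rewrite add1n subSS exprS mulrA.
rewrite add0n subSn ?count_size // exprS; ring.
Qed.

Lemma sum_natr_count (T : Type) (s : seq T) (P : pred T) (c : R) :
  \sum_(x <- s) (P x)%:R * c = (count P s)%:R * c.
Proof.
elim: s => [|x s IH]; first by rewrite big_nil mul0r.
by rewrite big_cons IH /= natrD mulrDl.
Qed.

Lemma sum_counts n (F : seq bool -> bool) :
  \sum_(bs <- allb n) wprod p bs * (F bs)%:R =
  \sum_(a <- iota 0 n.+1)
     (count (fun bs => F bs && (count id bs == a)) (allb n))%:R * (p ^+ a * (1 - p) ^+ (n - a)).
Proof.
under [RHS]eq_bigr do rewrite -sum_natr_count.
rewrite [RHS]exchange_big big_seq [RHS]big_seq; apply: eq_bigr => bs hbs.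
have sz := allb_size hbs.
have hm : (count id bs < n.+1)%N by rewrite ltnS -sz count_size.
have hin : count id bs \in iota 0 n.+1 by rewrite mem_iota add0n hm.
rewrite (bigD1_seq (count id bs)); [| exact: hin | exact: iota_uniq].
rewrite /= eqxx andbT.
rewrite big1 ?addr0.
  by rewrite wprodE sz mulrC.
by move=> a /negbTE ha; rewrite eq_sym ha andbF mul0r.
Qed.
End Count.

Ltac crunch := repeat match goal with |- context [count ?P (allb ?n)] =>
  let v := eval vm_compute in (count P (allb n)) in
  rewrite (_ : count P (allb n) = v); [| by vm_compute] end.

Section Main.
Variables (R : realType) (p : R).

Lemma op_prob_eq i : op_prob p i = \sum_(a <- iota 0 4)
  (count (fun bs => (OP (coins_list (A0 0) bs) 0 == pi_op i) && (count id bs == a)) (allb 3))%:R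
    * (p ^+ a * (1 - p) ^+ (3 - a)).
Proof.
rewrite /op_prob (@prob_marg _ _ 2 (A0 0)) //; first exact: sum_counts.
exact: OP_dep.
Qed.

Lemma part1 (i : 'I_6) : op_prob p i = nth 0 [:: p ^+ 2; p ^+ 2 * (1 - p); p ^+ 2 * (1 - p);
                             p * (1 - p) ^+ 2; p * (1 - p) ^+ 2; (1 - p) ^+ 2] i.
Proof.
rewrite op_prob_eq; case: i => [[|[|[|[|[|[|i]]]]]] hi] //=;
  rewrite !big_cons big_nil; crunch; rewrite /=; ring.
Qed.
End Main.

Lemma allb_cat (R : nmodType) m n (G : seq bool -> R) :
  \sum_(bs <- allb (m + n)) G bs = \sum_(x <- allb m) \sum_(y <- allb n) G (x ++ y).
Proof.
elim: m G => [|m IH] G; first by rewrite add0n big_seq1.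
rewrite addSn /= !big_cat !big_map.
by congr (_ + _); rewrite IH.
Qed.

Lemma dep_sub A B E : {subset A <= B} -> dep_on A E -> dep_on B E.
Proof. by move=> hAB hA xi xi' h; apply: hA => s t /hAB; apply: h. Qed.

Lemma dep_and A B E1 E2 : dep_on A E1 -> dep_on B E2 ->
  dep_on (A ++ B) (fun xi => E1 xi && E2 xi).
Proof.
move=> h1 h2 xi xi' h; rewrite (h1 xi xi') ?(h2 xi xi') // => s t hst; apply: h;
  by rewrite mem_cat hst ?orbT.
Qed.

Lemma coins_list_catl A B x y s t : size x = size A -> (s, t) \in A ->
  coins_list (A ++ B) (x ++ y) s t = coins_list A x s t.
Proof.
move=> sz hst; rewrite /coins_list index_cat hst nth_cat sz index_mem hst //.
Qed.

Lemma coins_list_catr A B x y s t : size x = size A -> (s, t) \notin A ->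
  coins_list (A ++ B) (x ++ y) s t = coins_list B y s t.
Proof.
move=> sz hst; rewrite /coins_list index_cat (negbTE hst) nth_cat sz ltnNge leq_addr /=.
by rewrite addKn.
Qed.

Definition shp k (st : nat * nat) : nat * nat := ((st.1 + k)%N, (st.2 + k)%N).

Lemma A0_shift k : A0 k = map (shp k) (A0 0).
Proof. by rewrite /A0 /shp /= !add0n !addSn. Qed.

Lemma shp_inj k : injective (shp k).
Proof. by move=> [a b] [c d] [/addIn -> /addIn ->]. Qed.

Lemma OP_list_shift k y : OP (coins_list (A0 k) y) k = OP (coins_list (A0 0) y) 0.
Proof.
rewrite OP_shift; congr OP; apply: funext => s; apply: funext => t.
rewrite /sh /coins_list A0_shift.
by rewrite (_ : ((s + k)%N, (t + k)%N) = shp k (s, t)) // index_map //; apply: shp_inj.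
Qed.

Section Indep.
Variables (R : realType) (p : R).

Lemma op_prob_list (i : 'I_6) : op_prob p i =
  \sum_(x <- allb 3) wprod p x * (OP (coins_list (A0 0) x) 0 == pi_op i)%:R.
Proof. by rewrite /op_prob (@prob_marg _ _ 2 (A0 0)) //; exact: OP_dep. Qed.

Lemma indep i j k : (3 <= k)%N -> op_prob2 p i j k = op_prob p i * op_prob p j.
Proof.
move=> hk.
have dis : forall st, st \in A0 k -> st \notin A0 0.
  move=> [s t]; rewrite !inE !xpair_eqE; lia.
have u1 : uniq (A0 0 ++ A0 k).
  rewrite cat_uniq; apply/and3P; split; first by [].
    by apply/hasPn => st /dis.
  rewrite /= !inE !xpair_eqE; lia.
have a1 : all (fun st => (st.1 < st.2 <= k + 2)%N) (A0 0 ++ A0 k).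
  rewrite all_cat /=; apply/andP; split; apply/and4P; split => //; lia.
rewrite /op_prob2 (@prob_marg _ _ (k + 2) (A0 0 ++ A0 k)) //;
  last first.
  move=> xi xi' h; congr andb; [apply: (@OP_dep 0 (pi_op i) xi xi') | apply: (@OP_dep k (pi_op j) xi xi')] => s t hst; apply: h; by rewrite mem_cat hst ?orbT.
rewrite (allb_cat 3 3) !op_prob_list mulr_suml; apply: eq_big_seq => x hx.
rewrite mulr_sumr; apply: eq_big_seq => y hy.
have szx := allb_size hx.
rewrite /wprod big_cat /= -!/(wprod p _).
have -> : OP (coins_list (A0 0 ++ A0 k) (x ++ y)) 0 = OP (coins_list (A0 0) x) 0.
  apply: OP0_dep => s t hst; exact: coins_list_catl.
have -> : OP (coins_list (A0 0 ++ A0 k) (x ++ y)) k = OP (coins_list (A0 k) y) k.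
  rewrite !(OP_shift _ k); congr OP; apply: funext => s; apply: funext => t.
  rewrite /sh coins_list_catr // !inE !xpair_eqE; lia.
rewrite OP_list_shift -mulnb natrM; ring.
Qed.
End Indep.

Section Final.
Variables (R : realType) (p : R).

Definition X1 : seq (nat * nat) := [:: (0, 1); (1, 2); (0, 2); (2, 3); (1, 3)]%N.
Definition X2 : seq (nat * nat) := [:: (0, 1); (1, 2); (0, 2); (2, 3); (3, 4); (2, 4)]%N.

Lemma op_prob2_eq (i j : 'I_6) k X : (k = 1 \/ k = 2)%N -> uniq X ->
  all (fun st => (st.1 < st.2 <= k + 2)%N) X -> {subset A0 0 ++ A0 k <= X} ->
  op_prob2 p i j k = \sum_(a <- iota 0 (size X).+1)
  (count (fun bs => ((OP (coins_list X bs) 0 == pi_op i) && (OP (coins_list X bs) k == pi_op j))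
     && (count id bs == a)) (allb (size X)))%:R * (p ^+ a * (1 - p) ^+ (size X - a)).
Proof.
move=> _ uq al sub.
rewrite /op_prob2 (@prob_marg _ _ (k + 2) X) //; first exact: sum_counts.
move=> xi xi' h; congr andb; [apply: (@OP_dep 0 (pi_op i) xi xi') | apply: (@OP_dep k (pi_op j) xi xi')]
  => s t hst; apply: h; apply: sub; by rewrite mem_cat hst ?orbT.
Qed.

Lemma op_prob2_1 (i j : 'I_6) : op_prob2 p i j 1 = \sum_(a <- iota 0 6)
  (count (fun bs => ((OP (coins_list X1 bs) 0 == pi_op i) && (OP (coins_list X1 bs) 1 == pi_op j))
     && (count id bs == a)) (allb 5))%:R * (p ^+ a * (1 - p) ^+ (5 - a)).
Proof. by rewrite (@op_prob2_eq i j 1 X1) //; (try by left); (try by right); apply/allP. Qed.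

Lemma op_prob2_2 (i j : 'I_6) : op_prob2 p i j 2 = \sum_(a <- iota 0 7)
  (count (fun bs => ((OP (coins_list X2 bs) 0 == pi_op i) && (OP (coins_list X2 bs) 2 == pi_op j))
     && (count id bs == a)) (allb 6))%:R * (p ^+ a * (1 - p) ^+ (6 - a)).
Proof. by rewrite (@op_prob2_eq i j 2 X2) //; (try by left); (try by right); apply/allP. Qed.

Lemma series_ev (u : nat -> R) : (forall k, (2 <= k)%N -> u k = 0) ->
  \forall n \near eventually, series u n = u 0%N + u 1%N.
Proof.
move=> h; exists 2%N => // n /= hn.
rewrite /series /= (big_cat_nat (n := 2)) //= big_nat_recr //= big_nat1.
rewrite big1_seq ?addr0 // => k /andP[_]; rewrite mem_index_iota => /andP[hk _]; exact: h.
Qed.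

Lemma cov_ev (i j : 'I_6) :
  \forall n \near eventually, series (fun k => cov_term p i j k.+1) n = cov_term p i j 1 + cov_term p i j 2.
Proof.
apply: series_ev => k hk.
by rewrite /cov_term !indep // ?ltnS //; ring.
Qed.
End Final.

Unset Implicit Arguments.

Theorem proposition3p2 (R : realType) (p : R) (hp0 : 0 < p) (hp1 : p < 1) :
  let q := 1 - p in
  (forall i : 'I_6,
     op_prob p i = nth 0 [:: p ^+ 2; p ^+ 2 * q; p ^+ 2 * q;
                             p * q ^+ 2; p * q ^+ 2; q ^+ 2] i) /\
  (forall i j : 'I_6, cvgn (series (fun k => cov_term p i j k.+1))) /\
  (forall i j : 'I_6,
     Sigma p i j = nth 0 (nth [::]
       [:: [:: p^+2 * (1 + 2 * p - 3 * p^+2); p^+3 * q * (1 - 3 * p); p^+3 * q * (1 - 3 * p);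
               p^+2 * q^+2 * (1 - 3 * p); p^+2 * q^+2 * (1 - 3 * p); - 3 * p^+2 * q^+2];
           [:: p^+3 * q * (1 - 3 * p); p^+2 * q * (1 - 3 * p^+2 * q); p^+3 * q * (1 - 3 * p * q);
               - 3 * p^+3 * q^+3; p^+2 * q^+2 * (1 - 3 * p * q); p^+2 * q^+2 * (1 - 3 * q)];
           [:: p^+3 * q * (1 - 3 * p); p^+3 * q * (1 - 3 * p * q); p^+2 * q * (1 - 3 * p^+2 * q);
               p^+2 * q^+2 * (1 - 3 * p * q); - 3 * p^+3 * q^+3; p^+2 * q^+2 * (1 - 3 * q)];
           [:: p^+2 * q^+2 * (1 - 3 * p); - 3 * p^+3 * q^+3; p^+2 * q^+2 * (1 - 3 * p * q);
               p * q^+2 * (1 - 3 * p * q^+2); p * q^+3 * (1 - 3 * p * q); p * q^+3 * (3 * p - 2)];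
           [:: p^+2 * q^+2 * (1 - 3 * p); p^+2 * q^+2 * (1 - 3 * p * q); - 3 * p^+3 * q^+3;
               p * q^+3 * (1 - 3 * p * q); p * q^+2 * (1 - 3 * p * q^+2); p * q^+3 * (3 * p - 2)];
           [:: - 3 * p^+2 * q^+2; p^+2 * q^+2 * (1 - 3 * q); p^+2 * q^+2 * (1 - 3 * q);
               p * q^+3 * (3 * p - 2); p * q^+3 * (3 * p - 2); p * q^+2 * (4 - 3 * p)]] i) j).
Proof.
move=> q; rewrite /q; split; first exact: part1.
split.
  by move=> i j; exact: (is_cvg_near_cst _ (cov_ev p i j)).
move=> i j; rewrite /Sigma (lim_near_cst (@Rhausdorff R) (cov_ev p i j)).
rewrite /cov_term !op_prob2_1 !op_prob2_2 !op_prob_eq.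
case: i => [[|[|[|[|[|[|i]]]]]] hi] //; case: j => [[|[|[|[|[|[|j]]]]]] hj] //=;
  rewrite !big_cons !big_nil; crunch; rewrite /=; ring.
Qed.
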